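(* Let $A\subseteq\{1,\dots,n\}$ and $w\in S_n$. If $\mathrm{Dela}_A(\bar\chi^w)\ne0$, then $\{(j,j+\iota_j(w)):j\notin A,\ \iota_j(w)\ne0\}\subseteq U_A^\vee$.
   Context: Let $q$ be a prime power, $\mathfrak{ut}_n$ the additive group of strictly upper triangular $n\times n$ matrices over $\mathbb{F}_q$. For $w\in S_n$ (one-line notation), $\iota_k(w)=\#\{i<w^{-1}(k):w(i)>k\}$ and $\mathfrak{ut}_w=\{x:x_{ij}\ne0\Rightarrow0<j-i\le\iota_i(w)\}$, a subgroup; $\bar\chi^w$ is the character of $\mathrm{Ind}_{\mathfrak{ut}_w}^{\mathfrak{ut}_n}(\mathbf 1)$ (the permutation character on cosets of $\mathfrak{ut}_w$). For $A\subseteq\{1,\dots,n\}$ and $1\le i<j\le n$, let $c_i=n-\#\{a\in A:a>i\}$, $U_A=\{(i,j):i\in A,j>c_i\}$, $L_A=\{(i,j):i\in A,j\le c_i\}$, $U_A^\vee=\{(i,j):i\notin A,j\le c_i\}$, $R_A=\{(i,j):i\notin A,j>c_i\}$, and $\mathfrak{ut}_A,\mathfrak{l}_A,\mathfrak{ut}_A^\vee,\mathfrak{r}_A$ the subgroups of matrices supported on them. For a function $\gamma$ on $\mathfrak{ut}_n$, $\mathrm{Dela}_A(\gamma)(u',u)=q^{-|L_A|-|R_A|}\sum_{l\in\mathfrak{l}_A,r\in\mathfrak{r}_A}(\frac{-1}{q-1})^{\#\{(i,j):r_{ij}\ne0\}}\gamma(l+u'+u+r)$ for $u'\in\mathfrak{ut}_A^\vee,u\in\mathfrak{ut}_A$.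 *)

(* Defs.v *)
(* Indices are 0-based: the paper's index i in {1..n}
   corresponds to the ordinal i-1 : 'I_n. *)
From HB Require Import structures.
From mathcomp Require Import all_boot all_order all_algebra all_fingroup all_field.
Set Implicit Arguments. Unset Strict Implicit. Unset Printing Implicit Defensive.
Import GRing.Theory.
Local Open Scope ring_scope.

Section UT.
Variables (F : finFieldType) (n : nat).

Definition qF : nat := #|F|.

Definition supported (S : pred ('I_n * 'I_n)) (x : 'M[F]_n) : bool :=
  [forall i, forall j, (x i j != 0) ==> S (i, j)].

Definition ut (x : 'M[F]_n) : bool := supported (fun p => (p.1 < p.2)%N) x.

Definition iota_perm (w : 'S_n) (k : 'I_n) : nat :=
  #|[set i : 'I_n | (i < (w^-1)%g k)%N && (k < w i)%N]|.

Definition utw (w : 'S_n) (x : 'M[F]_n) : bool :=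
  supported (fun p => (p.1 < p.2)%N && (p.2 - p.1 <= iota_perm w p.1)%N) x.

(* chibar^w : character of Ind_{ut_w}^{ut_n}(1), by the induced-character
   formula (1/|H|) sum_{x in G} 1_H(x^{-1} g x), written additively. *)
Definition chibar (w : 'S_n) (g : 'M[F]_n) : rat :=
  (#|[pred x | utw w x]|%:R)^-1 *
  \sum_(x : 'M[F]_n | ut x) (if utw w (- x + g + x) then 1 else 0).

Definition cA (A : {set 'I_n}) (i : 'I_n) : nat :=
  (n - #|[set a in A | (i < a)%N]|)%N.

(* With 1-based column j' = j+1, "j' > c_i" is "c_i <= j" and
   "j' <= c_i" is "j < c_i". All sets consist of positions i < j. *)
Definition UA (A : {set 'I_n}) (p : 'I_n * 'I_n) : bool :=
  [&& (p.1 < p.2)%N, p.1 \in A & (cA A p.1 <= p.2)%N].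
Definition LA (A : {set 'I_n}) (p : 'I_n * 'I_n) : bool :=
  [&& (p.1 < p.2)%N, p.1 \in A & (p.2 < cA A p.1)%N].
Definition UAv (A : {set 'I_n}) (p : 'I_n * 'I_n) : bool :=
  [&& (p.1 < p.2)%N, p.1 \notin A & (p.2 < cA A p.1)%N].
Definition RA (A : {set 'I_n}) (p : 'I_n * 'I_n) : bool :=
  [&& (p.1 < p.2)%N, p.1 \notin A & (cA A p.1 <= p.2)%N].

Definition nnz (r : 'M[F]_n) : nat := #|[set p : 'I_n * 'I_n | r p.1 p.2 != 0]|.

Definition Dela (A : {set 'I_n}) (gamma : 'M[F]_n -> rat)
    (u' u : 'M[F]_n) : rat :=
  (qF%:R ^- (#|[set p | LA A p]| + #|[set p | RA A p]|)) *
  \sum_(l : 'M[F]_n | supported (LA A) l)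
    \sum_(r : 'M[F]_n | supported (RA A) r)
      ((-1) / (qF%:R - 1)) ^+ nnz r * gamma (l + u' + u + r).

End UT.

(* Main.v *)
Require Import Defs.
From mathcomp Require Import all_boot all_order all_algebra all_fingroup all_field.
Set Implicit Arguments. Unset Strict Implicit. Unset Printing Implicit Defensive.
Import GRing.Theory.
Local Open Scope ring_scope.

Section Helpers.
Variables (F : finFieldType) (n : nat) (j k : 'I_n).
Local Notation E := (delta_mx j k : 'M[F]_n).
Definition Pz (r : 'M[F]_n) : 'M[F]_n := r - r j k *: E.

Lemma PzE (r : 'M[F]_n) i l : Pz r i l = if (i == j) && (l == k) then 0 else r i l.
Proof.
rewrite /Pz !mxE; case: (i =P j) => [->|_]; case: (l =P k) => [->|_] /=;
  by rewrite ?mulr1 ?subrr ?mulr0 ?subr0.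
Qed.

Lemma addEE (r0 : 'M[F]_n) (t : F) i l : (r0 + t *: E) i l = if (i == j) && (l == k) then r0 i l + t else r0 i l.
Proof.
rewrite !mxE; case: (i =P j) => [->|_]; case: (l =P k) => [->|_] /=;
  by rewrite ?mulr1 ?mulr0 ?addr0.
Qed.

Lemma supp_Pz (S : pred ('I_n * 'I_n)) (r : 'M[F]_n) : supported S r -> supported S (Pz r).
Proof.
move=> /forallP H; apply/forallP => i; apply/forallP => l; rewrite PzE.
case: ifP => _; first by rewrite eqxx.
exact: (forallP (H i) l).
Qed.

Lemma supp_add (S : pred ('I_n * 'I_n)) (r0 : 'M[F]_n) (t : F) : S (j, k) -> supported S r0 ->
  supported S (r0 + t *: E).
Proof.
move=> Sjk /forallP H; apply/forallP => i; apply/forallP => l; rewrite addEE.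
case: ifP => [/andP [/eqP -> /eqP ->]|_]; first by rewrite Sjk implybT.
exact: (forallP (H i) l).
Qed.

Lemma Pz_add (r0 : 'M[F]_n) (t : F) : r0 j k = 0 -> Pz (r0 + t *: E) = r0.
Proof.
move=> z; apply/matrixP => i l; rewrite PzE addEE.
by case: (i =P j) => [->|_]; case: (l =P k) => [->|_] //=.
Qed.

Lemma add_Pz (r : 'M[F]_n) : Pz r + r j k *: E = r.
Proof. by rewrite /Pz subrK. Qed.

Lemma nnz_Pz (r : 'M[F]_n) : nnz r = ((r j k != 0%R) + nnz (Pz r))%N.
Proof.
rewrite /nnz (cardsD1 (j, k)) [X in _ = (_ + X)%N](cardsD1 (j, k)) !inE /= PzE !eqxx /=.
rewrite add0n; congr (_ + _)%N; apply: eq_card => p; rewrite !inE PzE.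
by case: (p =P (j,k)) => [->|]; [ | case: p => a b /= ne; case: ifP => // /andP [/eqP ea /eqP eb]; case: ne; rewrite ea eb].
Qed.

Lemma utw_add (w : 'S_n) (g : 'M[F]_n) (t : F) : (j < k)%N -> (k - j <= iota_perm w j)%N ->
  utw w (g + t *: E) = utw w g.
Proof.
move=> jk kj; rewrite /utw /supported.
apply/forallP/forallP => H i; apply/forallP => l; have := forallP (H i) l; rewrite addEE;
  case: ifP => [/andP [/eqP -> /eqP ->]|//] _ /=; by rewrite jk kj implybT.
Qed.

Lemma chibar_add (w : 'S_n) (g : 'M[F]_n) (t : F) : (j < k)%N -> (k - j <= iota_perm w j)%N ->
  chibar w (g + t *: E) = chibar w g.
Proof.
move=> jk kj; rewrite /chibar; congr (_ * _); apply: eq_bigr => x _.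
have -> : - x + (g + t *: E) + x = (- x + g + x) + t *: E.
  by rewrite [RHS]addrAC !addrA.
by rewrite utw_add.
Qed.
End Helpers.

Lemma sum_sign (F : finFieldType) :
  \sum_(t : F) ((-1) / ((qF F)%:R - 1)) ^+ (t != 0) = 0 :> rat.
Proof.
rewrite (bigD1 0) //= eqxx expr0.
rewrite (eq_bigr (fun _ => (-1) / ((qF F)%:R - 1))); last by move=> t /= ->.
have -> : \sum_(t : F | true && (t != 0)) ((-1) / ((qF F)%:R - 1) : rat)
   = \sum_(t in predC1 (0 : F)) ((-1) / ((qF F)%:R - 1)) by apply: eq_bigl.
rewrite sumr_const cardC1.
have hm : (0 < #|F|.-1)%N by rewrite -(cardC1 (0 : F)); apply/card_gt0P; exists 1; rewrite !inE /= oner_neq0.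
rewrite /qF; case E: #|F| hm => [|m] //= hm.
have mz : (m%:R : rat) != 0 by rewrite Num.Theory.pnatr_eq0 -lt0n.
rewrite -addn1 natrD addrK mulNr mul1r mulNrn -[_ *+ m]mulr_natr mulVf // addrN.
Qed.

Lemma inner_zero (F : finFieldType) (n : nat) (A : {set 'I_n}) (w : 'S_n) (j k : 'I_n)
  (g : 'M[F]_n) : RA A (j, k) -> (j < k)%N -> (k - j <= iota_perm w j)%N ->
  \sum_(r : 'M[F]_n | supported (RA A) r)
      ((-1) / ((qF F)%:R - 1)) ^+ nnz r * chibar w (g + r) = 0.
Proof.
move=> Sjk jk kj.
rewrite (partition_big (Pz j k) (fun r0 => supported (RA A) r0 && (r0 j k == 0))) /=; last first.
  by move=> r Hr; rewrite supp_Pz // PzE !eqxx.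
apply: big1 => r0 /andP [Sr0 /eqP z].
rewrite (reindex_onto (fun t => r0 + t *: delta_mx j k) (fun r => r j k)) /=; last first.
  by move=> r /andP [_ /eqP <-]; exact: add_Pz.
transitivity (\sum_(t : F) ((-1) / ((qF F)%:R - 1)) ^+ nnz r0 * chibar w (g + r0)
     * ((-1) / ((qF F)%:R - 1)) ^+ (t != 0)).
  apply: eq_big => t.
    by rewrite supp_add // Pz_add // eqxx addEE !eqxx z add0r eqxx.
  move=> _; rewrite (nnz_Pz j k) Pz_add // addEE !eqxx z add0r addrA chibar_add //.
  by rewrite exprD /= ?z ?add0r -mulrA mulrC.
by rewrite -big_distrr /= sum_sign mulr0.
Qed.

Theorem lemma5p4 (F : finFieldType) (n : nat) (A : {set 'I_n}) (w : 'S_n) :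
  (exists u' u : 'M[F]_n,
      [/\ supported (UAv A) u', supported (UA A) u &
          Dela A (chibar w) u' u != 0]) ->
  forall j k : 'I_n,
    j \notin A -> iota_perm w j != 0%N ->
    nat_of_ord k = (nat_of_ord j + iota_perm w j)%N ->
    UAv A (j, k).
Proof.
move=> [u' [u [Hu' Hu Hne]]] j k jA iz kE.
have jk : (j < k)%N by rewrite kE -[X in (X < _)%N]addn0 ltn_add2l lt0n.
apply/negPn/negP => nU; apply: (negP Hne).
have Rjk : RA A (j, k).
  move: nU; rewrite /UAv /RA /= jk jA /= -leqNgt; exact.
rewrite /Dela; apply/eqP; rewrite big1 ?mulr0 // => l _.
apply: (inner_zero (j := j) (k := k)) => //.
by rewrite kE addKn.
Qed.
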